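(* Let $\varepsilon \in [0,1]$ and let $w_1, w_2 \in \mathbb{S}^{n-1}$ satisfy $\|w_1 - w_2\| \leq 1 - \varepsilon^2/2$. Let $v_1, v \in \mathbb{R}^n$ satisfy $\langle w_1, v_1\rangle \geq 1$, $\langle w_2, v\rangle \geq \langle w_2, v_1\rangle$, and $\|v_1\|, \|v\| \leq (1-\varepsilon^2/2)^{-1}$. Let $a \in \mathbb{S}^{n-1}$ satisfy $\langle a, v\rangle \geq 1$. Then $\|w_2 - a\| \leq 2\varepsilon + \|w_1 - w_2\|$.
   Context: $\|\cdot\|$ is the Euclidean norm and $\mathbb{S}^{n-1}$ the Euclidean unit sphere in $\mathbb{R}^n$. *)

(* Defs.v *)
From mathcomp Require Import all_boot all_order all_algebra.
Set Implicit Arguments. Unset Strict Implicit. Unset Printing Implicit Defensive.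
Import Order.TTheory GRing.Theory Num.Theory.
Local Open Scope ring_scope.

Definition dotv (R : rcfType) (n : nat) (u v : 'rV[R]_n) : R :=
  \sum_(i < n) u 0 i * v 0 i.

Definition enorm (R : rcfType) (n : nat) (u : 'rV[R]_n) : R :=
  Num.sqrt (dotv u u).

Definition on_sphere (R : rcfType) (n : nat) (u : 'rV[R]_n) : Prop :=
  enorm u = 1.

(* Main.v *)
Require Import Defs.
From mathcomp Require Import all_boot all_order all_algebra.
From mathcomp Require Import ring lra.
Import Order.TTheory GRing.Theory Num.Theory.
Local Open Scope ring_scope.

Section Aux.
Variables (R : rcfType) (n : nat).
Implicit Types (u v w : 'rV[R]_n) (c : R).

Lemma dotvC u v : dotv u v = dotv v u.
Proof. by rewrite /dotv; apply: eq_bigr => i _; rewrite mulrC. Qed.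

Lemma dotvDl u v w : dotv (u + v) w = dotv u w + dotv v w.
Proof. by rewrite /dotv -big_split; apply: eq_bigr => i _; rewrite mxE mulrDl. Qed.

Lemma dotvNl u w : dotv (- u) w = - dotv u w.
Proof. by rewrite /dotv -sumrN; apply: eq_bigr => i _; rewrite mxE mulNr. Qed.

Lemma dotvZl c u w : dotv (c *: u) w = c * dotv u w.
Proof. by rewrite /dotv mulr_sumr; apply: eq_bigr => i _; rewrite mxE mulrA. Qed.

Lemma dotvBl u v w : dotv (u - v) w = dotv u w - dotv v w.
Proof. by rewrite dotvDl dotvNl. Qed.

Lemma dotvDr u v w : dotv w (u + v) = dotv w u + dotv w v.
Proof. by rewrite dotvC dotvDl !(dotvC w). Qed.

Lemma dotvNr u w : dotv w (- u) = - dotv w u.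
Proof. by rewrite dotvC dotvNl dotvC. Qed.

Lemma dotvZr c u w : dotv w (c *: u) = c * dotv w u.
Proof. by rewrite dotvC dotvZl dotvC. Qed.

Lemma dotvBr u v w : dotv w (u - v) = dotv w u - dotv w v.
Proof. by rewrite dotvDr dotvNr. Qed.

Lemma dotv_ge0 u : 0 <= dotv u u.
Proof. by apply: sumr_ge0 => i _; nra. Qed.

Lemma enorm_ge0 u : 0 <= enorm u.
Proof. exact: sqrtr_ge0. Qed.

Lemma enorm_sq u : enorm u ^+ 2 = dotv u u.
Proof. by rewrite /enorm sqr_sqrtr // dotv_ge0. Qed.

Lemma dotv0 u v : dotv u u = 0 -> dotv u v = 0.
Proof.
move=> h; rewrite /dotv big1 // => i _.
have hp : forall i : 'I_n, xpredT i -> 0 <= u 0 i * u 0 i by move=> j _; nra.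
have := @psumr_eq0P R _ xpredT (fun i => u 0 i * u 0 i) hp h i isT.
by move/eqP; rewrite mulf_eq0 orbb => /eqP ->; rewrite mul0r.
Qed.

Lemma CS u v : dotv u v <= enorm u * enorm v.
Proof.
have hu := enorm_sq u; have hv := enorm_sq v.
have gu := enorm_ge0 u; have gv := enorm_ge0 v.
have [e0|eu] := eqVneq (enorm u) 0.
  rewrite dotv0; first by rewrite e0 mul0r.
  by rewrite -hu e0 expr0n.
have [e1|ev] := eqVneq (enorm v) 0.
  rewrite dotvC dotv0; first by rewrite e1 mulr0.
  by rewrite -hv e1 expr0n.
have := dotv_ge0 (enorm v *: u - enorm u *: v).
rewrite !(dotvBl, dotvBr, dotvZl, dotvZr) -hu -hv (dotvC v u) => H.
have pu : 0 < enorm u by rewrite lt_def eu.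
have pv : 0 < enorm v by rewrite lt_def ev.
have pp := mulr_gt0 pu pv.
set B := dotv u v in H *; set x := enorm u in H pp *; set y := enorm v in H pp *.
have H2 : 0 <= (x * y) * (2 * (x * y - B)) by lra.
rewrite pmulr_rge0 // in H2; lra.
Qed.

Lemma sq_le (x y : R) : 0 <= x -> 0 <= y -> x ^+ 2 <= y ^+ 2 -> x <= y.
Proof. move=> hx hy h; nra. Qed.

Lemma enormD u v : enorm (u + v) <= enorm u + enorm v.
Proof.
apply: sq_le; rewrite ?addr_ge0 ?enorm_ge0 //.
rewrite enorm_sq !(dotvDl, dotvDr) -!enorm_sq (dotvC v u).
have := CS u v; nra.
Qed.

Lemma enormN u : enorm (- u) = enorm u.
Proof. by rewrite /enorm dotvNl dotvNr opprK. Qed.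

Lemma enormB u v : enorm (u - v) <= enorm u + enorm v.
Proof. by rewrite -(enormN v) enormD. Qed.

Lemma expandB u v c : dotv (u - c *: v) (u - c *: v) =
  dotv u u - 2 * c * dotv u v + c ^+ 2 * dotv v v.
Proof. rewrite !(dotvBl, dotvBr, dotvZl, dotvZr) (dotvC v u); ring. Qed.

Lemma sphere1 u : on_sphere u -> dotv u u = 1.
Proof. by move=> h; rewrite -enorm_sq h expr1n. Qed.

End Aux.
Arguments enorm_ge0 {R n}. Arguments enorm_sq {R n}. Arguments dotv_ge0 {R n}.
Arguments enormD {R n}. Arguments enormB {R n}. Arguments enormN {R n}.
Arguments expandB {R n}. Arguments sphere1 {R n}. Arguments sq_le {R}.

Theorem lemma3p6 (R : rcfType) (n : nat) (eps : R) (w1 w2 v1 v a : 'rV[R]_n) :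
  0 <= eps -> eps <= 1 ->
  on_sphere w1 -> on_sphere w2 ->
  enorm (w1 - w2) <= 1 - eps ^+ 2 / 2 ->
  1 <= dotv w1 v1 ->
  dotv w2 v1 <= dotv w2 v ->
  enorm v1 <= (1 - eps ^+ 2 / 2)^-1 ->
  enorm v <= (1 - eps ^+ 2 / 2)^-1 ->
  on_sphere a ->
  1 <= dotv a v ->
  enorm (w2 - a) <= 2 * eps + enorm (w1 - w2).
Proof.
move=> e0 e1 sw1 sw2 hd hX1 hY hv1 hv sa hZ.
set dl := 1 - eps ^+ 2 / 2 in hd hv1 hv.
have dlp : 0 < dl by rewrite /dl; nra.
have dlle : dl <= 1 by rewrite /dl; nra.
have n1 : dl ^+ 2 * dotv v1 v1 <= 1.
  have := enorm_ge0 v1; rewrite -enorm_sq => g.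
  have h1 : dl * enorm v1 <= 1 by rewrite -(mulfV (lt0r_neq0 dlp)) ler_pM2l.
  have h2 : 0 <= dl * enorm v1 by apply: mulr_ge0 => //; apply: ltW.
  rewrite -exprMn; move: h1 h2; set t := dl * enorm v1 => h1 h2; nra.
have n0 : dl ^+ 2 * dotv v v <= 1.
  have := enorm_ge0 v; rewrite -enorm_sq => g.
  have h1 : dl * enorm v <= 1 by rewrite -(mulfV (lt0r_neq0 dlp)) ler_pM2l.
  have h2 : 0 <= dl * enorm v by apply: mulr_ge0 => //; apply: ltW.
  rewrite -exprMn; move: h1 h2; set t := dl * enorm v => h1 h2; nra.
have N1 := dotv_ge0 v1; have N0 := dotv_ge0 v.
have epsq : eps ^+ 2 = 2 - 2 * dl by rewrite /dl; field.
have k1 : dl <= dl * dotv w1 v1 by rewrite -{1}(mulr1 dl) ler_pM2l.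
have k2 : dl <= dl * dotv a v by rewrite -{1}(mulr1 dl) ler_pM2l.
have k3 : dl * dotv w2 v1 <= dl * dotv w2 v by rewrite ler_pM2l.
clearbody dl.
set d := enorm (w1 - w2).
have gd : 0 <= d := enorm_ge0 _.
have E1 := enorm_sq (w1 - dl *: v1); rewrite expandB sphere1 // in E1.
have ge1 := enorm_ge0 (w1 - dl *: v1).
have e1le : enorm (w1 - dl *: v1) <= eps.
  apply: sq_le => //; rewrite E1 epsq; lra.
have F := enorm_sq (w2 - dl *: v1); rewrite expandB sphere1 // in F.
have fle : enorm (w2 - dl *: v1) <= d + enorm (w1 - dl *: v1).
  have -> : w2 - dl *: v1 = (w2 - w1) + (w1 - dl *: v1) by rewrite addrA subrK.
  apply: le_trans (enormD _ _) _; rewrite -enormN opprB; done.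
have gf := enorm_ge0 (w2 - dl *: v1).
have G := enorm_sq (w2 - dl *: v); rewrite expandB sphere1 // in G.
have gg := enorm_ge0 (w2 - dl *: v).
have H := enorm_sq (a - dl *: v); rewrite expandB sphere1 // in H.
have gh := enorm_ge0 (a - dl *: v).
have hle : enorm (a - dl *: v) <= eps.
  apply: sq_le => //; rewrite H epsq; lra.
have key : 2 - 2 * dl * dotv w2 v1 <= (d + eps) ^+ 2.
  have q1 : enorm (w2 - dl *: v1) ^+ 2 <= (d + enorm (w1 - dl *: v1)) ^+ 2.
    by rewrite ler_pXn2r // ?nnegrE ?addr_ge0.
  have q2 : d * enorm (w1 - dl *: v1) <= d * eps by rewrite ler_wpM2l.
  move: q1 q2; rewrite F; move: E1 k1 e1le epsq.
  set e := enorm (w1 - dl *: v1); set X := dotv w1 v1; set Y := dotv w2 v1; set P := dotv v1 v1.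
  move=> *; lra.
have gle : enorm (w2 - dl *: v) <= d + eps.
  apply: sq_le; rewrite ?addr_ge0 // G.
  move: key k3 n0; set Y := dotv w2 v1; set Z := dotv w2 v; set P := dotv v v; move=> *; lra.
have -> : w2 - a = (w2 - dl *: v) - (a - dl *: v) by rewrite opprB addrA subrK.
apply: le_trans (enormB _ _) _; lra.
Qed.
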